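(* Let $L$ be an infinite set and let $Q$ be either the edgeless cube $Q_L$ or the edged cube $\bar Q_L$. If $f_0$ is an illegal configuration, then for every basic sequence, its terminal configuration when applied to $f_0$ is illegal; i.e., no legal configuration is accessible from an illegal one.
   Context: Let $L$ be an infinite set, $-L=\{-r:r\in L\}$ a disjoint copy of $L$, and $0$ a new element; $L^\dagger=-L\cup\{0\}\cup L$ with $-(-r)=r$, $-0=0$. Adjoin $\pm\infty$ with $-(+\infty)=-\infty$ and set $\bar L^\dagger=L^\dagger\cup\{\pm\infty\}$. Points of $U=(\bar L^\dagger)^3$ have coordinates $x,y,z$. The edgeless cube $Q_L$ is the set of points of $U$ with exactly one coordinate in $\{\pm\infty\}$ (cells). The edged cube $\bar Q_L$ is the set of cells $(p,i)$ with $p\in U$, $i\in\{x,y,z\}$, $p_i\in\{\pm\infty\}$ ($i$ marks the face). For $i\in\{x,y,z\}$, $\alpha\in\bar L^\dagger$, the quarter-turn twist $T_{i,\alpha}$ is the permutation of cells fixing every cell whose point $p$ has $p_i\ne\alpha$ and acting on the others by $T_{x,\alpha}(\alpha,y,z)=(\alpha,-z,y)$, $T_{y,\alpha}(x,\alpha,z)=(z,\alpha,-x)$, $T_{z,\alpha}(x,y,\alpha)=(-y,x,\alpha)$ (in $\bar Q_L$ the marked coordinate is carried along by the rotation). Basic twists are $T,T^2,T^3$ for quarter-turn twists $T$. A basic sequence is a sequence $\langle\sigma_\eta:\eta<\theta\rangle$ of basic twists of ordinal length $\theta$. A configuration is a map $f$ from cells to the six colors red, white, green, orange, yellow, blue together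 with a special value NaC; it is legal if it never takes value NaC and illegal otherwise. A twist $\sigma$ acts by $(\sigma f)(c)=f(\sigma^{-1}c)$. Applying $\langle\sigma_\eta:\eta<\theta\rangle$ to $f_0$ produces $f_{\eta+1}=\sigma_\eta f_\eta$, and for limit $\lambda\le\theta$, $f_\lambda(c)$ is the eventually constant value of $f_\eta(c)$ ($\eta<\lambda$) if it exists and NaC otherwise; $f_\theta$ is the terminal configuration. $f$ is accessible from $f_0$ if it is the terminal configuration of some basic sequence applied to $f_0$. *)

(* Defs.v *)
From Stdlib Require Import Arith Lia List ClassicalEpsilon.
Set Implicit Arguments.

Section Cube.
Variable L : Type.

(* bar L^dagger = -L ∪ {0} ∪ L ∪ {±oo} *)
Inductive ext : Type := Pos (l : L) | Neg (l : L) | Zero | PInf | NInf.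

Definition negE (a : ext) : ext :=
  match a with
  | Pos l => Neg l | Neg l => Pos l | Zero => Zero | PInf => NInf | NInf => PInf
  end.

Definition isinfb (a : ext) : bool :=
  match a with PInf | NInf => true | _ => false end.

Lemma isinfb_neg a : isinfb (negE a) = isinfb a.
Proof. destruct a; reflexivity. Qed.

Definition point : Type := (ext * ext * ext)%type.

Inductive axis : Type := AX | AY | AZ.

Definition coord (i : axis) (p : point) : ext :=
  match p with (x, y, z) =>
    match i with AX => x | AY => y | AZ => z end end.

Definition rot (i : axis) (p : point) : point :=
  match p with (x, y, z) =>
    match i with
    | AX => (x, negE z, y)
    | AY => (z, y, negE x)
    | AZ => (negE y, x, z)
    end end.

Definition qturn_pt (i : axis) (a : ext) (p : point) : point :=
  if excluded_middle_informative (coord i p = a) then rot i p else p.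

Definition ninf (p : point) : nat :=
  match p with (x, y, z) =>
    Nat.b2n (isinfb x) + Nat.b2n (isinfb y) + Nat.b2n (isinfb z) end.

Lemma ninf_rot i p : ninf (rot i p) = ninf p.
Proof.
  destruct p as [[x y] z]; destruct i; simpl; rewrite ?isinfb_neg; lia.
Qed.

Lemma ninf_qturn i a p : ninf (qturn_pt i a p) = ninf p.
Proof.
  unfold qturn_pt; destruct (excluded_middle_informative _);
    [apply ninf_rot | reflexivity].
Qed.

(* Edgeless cube Q_L: points with exactly one infinite coordinate. *)
Definition qcell : Type := {p : point | ninf p = 1}.

Definition qturn_q (i : axis) (a : ext) (c : qcell) : qcell :=
  exist _ (qturn_pt i a (proj1_sig c))
    (eq_trans (ninf_qturn i a (proj1_sig c)) (proj2_sig c)).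

(* how the marked coordinate is carried along by the rotation about axis i *)
Definition markrot (i j : axis) : axis :=
  match i, j with
  | AX, AY => AZ | AX, AZ => AY
  | AY, AX => AZ | AY, AZ => AX
  | AZ, AX => AY | AZ, AY => AX
  | _, _ => j
  end.

Lemma isinfb_markrot i j p :
  isinfb (coord (markrot i j) (rot i p)) = isinfb (coord j p).
Proof.
  destruct p as [[x y] z]; destruct i, j; simpl; rewrite ?isinfb_neg; reflexivity.
Qed.

(* Edged cube bar Q_L: cells (p, i) with p_i infinite. *)
Definition ecell : Type := {pi : point * axis | isinfb (coord (snd pi) (fst pi)) = true}.

Definition qturn_e_raw (i : axis) (a : ext) (pi : point * axis) : point * axis :=
  if excluded_middle_informative (coord i (fst pi) = a)
  then (rot i (fst pi), markrot i (snd pi)) else pi.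

Lemma qturn_e_ok i a pi :
  isinfb (coord (snd pi) (fst pi)) = true ->
  isinfb (coord (snd (qturn_e_raw i a pi)) (fst (qturn_e_raw i a pi))) = true.
Proof.
  intro H; unfold qturn_e_raw; destruct (excluded_middle_informative _);
    simpl; [rewrite isinfb_markrot|]; exact H.
Qed.

Definition qturn_e (i : axis) (a : ext) (c : ecell) : ecell :=
  exist _ (qturn_e_raw i a (proj1_sig c)) (@qturn_e_ok i a (proj1_sig c) (proj2_sig c)).

Definition cell (edged : bool) : Type := if edged then ecell else qcell.

Definition qturn (edged : bool) : axis -> ext -> cell edged -> cell edged :=
  match edged return axis -> ext -> cell edged -> cell edged with
  | true => qturn_e | false => qturn_q
  end.

(* basic twists: T, T^2, T^3 for a quarter turn T = T_{i,alpha} *)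
Inductive power : Type := P1 | P2 | P3.
Record basic_twist : Type := BT { bt_axis : axis; bt_val : ext; bt_pow : power }.

(* sigma^{-1} for sigma = T^k is T^(4-k) *)
Definition inv_iter (k : power) : nat := match k with P1 => 3 | P2 => 2 | P3 => 1 end.

Definition twist_inv (edged : bool) (s : basic_twist) (c : cell edged) : cell edged :=
  Nat.iter (inv_iter (bt_pow s)) (qturn edged (bt_axis s) (bt_val s)) c.

Inductive color : Type := red | white | green | orange | yellow | blue.

(* configurations: None stands for NaC *)
Definition config (edged : bool) : Type := cell edged -> option color.

Definition legal (edged : bool) (f : config edged) : Prop := forall c, f c <> None.
Definition illegal (edged : bool) (f : config edged) : Prop := exists c, f c = None.

Definition act (edged : bool) (s : basic_twist) (f : config edged) : config edged :=
  fun c => f (twist_inv edged s c).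

End Cube.

Arguments Pos {L}. Arguments Neg {L}. Arguments Zero {L}.
Arguments PInf {L}. Arguments NInf {L}.

(* Ordinal length theta: a well-ordered type W (every ordinal is the order
   type of one, and conversely).  Positions eta <= theta are option W:
   Some w is the position of w, None is theta itself. *)
Definition well_order (W : Type) (lt : W -> W -> Prop) : Prop :=
  (forall a, ~ lt a a) /\
  (forall a b c, lt a b -> lt b c -> lt a c) /\
  (forall a b, lt a b \/ a = b \/ lt b a) /\
  well_founded lt.

Definition ltp (W : Type) (lt : W -> W -> Prop) (x y : option W) : Prop :=
  match x, y with
  | Some a, Some b => lt a b
  | Some _, None => True
  | None, _ => False
  end.

Definition ev_const (L : Type) (edged : bool) (W : Type) (lt : W -> W -> Prop)
  (F : option W -> config L edged) (eta : option W) (c : cell L edged)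
  (v : option color) : Prop :=
  exists xi, ltp lt xi eta /\
    forall zeta, (xi = zeta \/ ltp lt xi zeta) -> ltp lt zeta eta -> F zeta c = v.

(* F is the run of the basic sequence sigma (indexed by W) applied to f0:
   F eta = f_eta for all eta <= theta. *)
Definition is_run (L : Type) (edged : bool) (W : Type) (lt : W -> W -> Prop)
  (sigma : W -> basic_twist L) (f0 : config L edged)
  (F : option W -> config L edged) : Prop :=
  forall eta : option W,
    ((forall xi, ~ ltp lt xi eta) -> F eta = f0) /\
    (forall w, ltp lt (Some w) eta ->
       (forall zeta, ~ (ltp lt (Some w) zeta /\ ltp lt zeta eta)) ->
       F eta = act (sigma w) (F (Some w))) /\
    ((exists xi, ltp lt xi eta) ->
     (forall w, ltp lt (Some w) eta ->
        exists zeta, ltp lt (Some w) zeta /\ ltp lt zeta eta) ->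
     forall c,
       (exists v, ev_const lt F eta c v /\ F eta c = v) \/
       ((forall v, ~ ev_const lt F eta c v) /\ F eta c = None)).

Definition infinite_type (L : Type) : Prop :=
  ~ exists l : list L, forall x : L, In x l.

(* Main.v *)
Require Import Defs.
From Stdlib Require Import List ClassicalEpsilon.
From Stdlib Require Import Classical ProofIrrelevance Lia.

Section Aux.
Variable L : Type.

Definition inK (S : list (ext L)) (p : point L) : Prop :=
  In (coord AX p) S /\ In (coord AY p) S /\ In (coord AZ p) S.

Definition negclosed (S : list (ext L)) : Prop := forall x, In x S -> In (negE x) S.

Lemma negE_inv (x : ext L) : negE (negE x) = x.
Proof. destruct x; reflexivity. Qed.

Lemma rot_inK S i p : negclosed S -> inK S p -> inK S (rot i p).
Proof.
  intros HN [H1 [H2 H3]]; destruct p as [[x y] z]; destruct i; simpl in *;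
  unfold inK; simpl; repeat split; auto.
Qed.

Lemma qturn_pt_inK S i a p : negclosed S -> inK S p -> inK S (qturn_pt i a p).
Proof.
  intros; unfold qturn_pt; destruct (excluded_middle_informative _); auto.
  apply rot_inK; auto.
Qed.

Lemma coord_rot i (p : point L) : coord i (rot i p) = coord i p.
Proof. destruct p as [[x y] z]; destruct i; reflexivity. Qed.

Lemma rot4 i (p : point L) : rot i (rot i (rot i (rot i p))) = p.
Proof. destruct p as [[x y] z]; destruct i; simpl; rewrite ?negE_inv; reflexivity. Qed.

Lemma markrot2 i j : markrot i (markrot i j) = j.
Proof. destruct i, j; reflexivity. Qed.

Lemma qturn_on i a (p : point L) : coord i p = a -> qturn_pt i a p = rot i p.
Proof. intro e; unfold qturn_pt; destruct (excluded_middle_informative _); congruence. Qed.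

Lemma qturn_off i a (p : point L) : coord i p <> a -> qturn_pt i a p = p.
Proof. intro e; unfold qturn_pt; destruct (excluded_middle_informative _); congruence. Qed.

Lemma qturn_pt4 i a (p : point L) :
  qturn_pt i a (qturn_pt i a (qturn_pt i a (qturn_pt i a p))) = p.
Proof.
  destruct (excluded_middle_informative (coord i p = a)) as [e|n].
  - rewrite (qturn_on _ _ _ e).
    rewrite (qturn_on i a (rot i p)) by (rewrite coord_rot; auto).
    rewrite (qturn_on i a (rot i (rot i p))) by (rewrite !coord_rot; auto).
    rewrite (qturn_on i a (rot i (rot i (rot i p)))) by (rewrite !coord_rot; auto).
    apply rot4.
  - rewrite !(qturn_off _ _ _ n); reflexivity.
Qed.

Lemma qe_on i a (p : point L) j : coord i p = a -> qturn_e_raw i a (p, j) = (rot i p, markrot i j).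
Proof. intro e; unfold qturn_e_raw; simpl; destruct (excluded_middle_informative _); congruence. Qed.

Lemma qe_off i a (p : point L) j : coord i p <> a -> qturn_e_raw i a (p, j) = (p, j).
Proof. intro e; unfold qturn_e_raw; simpl; destruct (excluded_middle_informative _); congruence. Qed.

Lemma qturn_e_raw4 i a (pi : point L * axis) :
  qturn_e_raw i a (qturn_e_raw i a (qturn_e_raw i a (qturn_e_raw i a pi))) = pi.
Proof.
  destruct pi as [p j].
  destruct (excluded_middle_informative (coord i p = a)) as [e|n].
  - rewrite (qe_on _ _ _ j e).
    rewrite (qe_on i a (rot i p)) by (rewrite coord_rot; auto).
    rewrite (qe_on i a (rot i (rot i p))) by (rewrite !coord_rot; auto).
    rewrite (qe_on i a (rot i (rot i (rot i p)))) by (rewrite !coord_rot; auto).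
    rewrite rot4, !markrot2; reflexivity.
  - rewrite !(qe_off _ _ _ j n); reflexivity.
Qed.

Lemma sig_eq (A : Type) (P : A -> Prop) (x y : sig P) : proj1_sig x = proj1_sig y -> x = y.
Proof.
  destruct x as [x hx], y as [y hy]; simpl; intro E; subst y.
  f_equal; apply proof_irrelevance.
Qed.

Definition keyc (edged : bool) : cell L edged -> point L * axis :=
  match edged return cell L edged -> point L * axis with
  | true => fun c => proj1_sig c
  | false => fun c => (proj1_sig c, AX)
  end.

Lemma keyc_inj edged (c d : cell L edged) : keyc edged c = keyc edged d -> c = d.
Proof.
  destruct edged; simpl in *; intro H; apply sig_eq; [exact H|].
  injection H; auto.
Qed.

Lemma qturn4 edged i a (c : cell L edged) :
  qturn edged i a (qturn edged i a (qturn edged i a (qturn edged i a c))) = c.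
Proof.
  destruct edged; simpl in *; apply sig_eq; simpl.
  - apply qturn_e_raw4.
  - apply qturn_pt4.
Qed.

Lemma qturn_inK S edged i a (c : cell L edged) : negclosed S ->
  inK S (fst (keyc edged c)) -> inK S (fst (keyc edged (qturn edged i a c))).
Proof.
  intros HN H; destruct edged; simpl in *.
  - unfold qturn_e_raw; destruct (excluded_middle_informative _); simpl; auto.
    apply rot_inK; auto.
  - apply qturn_pt_inK; auto.
Qed.

Definition fwd_iter (k : power) : nat := match k with P1 => 1 | P2 => 2 | P3 => 3 end.

Definition fwd edged (s : basic_twist L) (c : cell L edged) : cell L edged :=
  Nat.iter (fwd_iter (bt_pow s)) (qturn edged (bt_axis s) (bt_val s)) c.

Lemma twist_inv_fwd edged s (c : cell L edged) : twist_inv edged s (fwd edged s c) = c.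
Proof.
  unfold twist_inv, fwd; destruct (bt_pow s); simpl; apply qturn4.
Qed.

Lemma fwd_inK S edged s (c : cell L edged) : negclosed S ->
  inK S (fst (keyc edged c)) -> inK S (fst (keyc edged (fwd edged s c))).
Proof.
  intros HN H; unfold fwd; destruct (bt_pow s); simpl;
  repeat apply qturn_inK; auto.
Qed.
End Aux.
Arguments keyc {L} edged _.
Arguments inK {L} S p.
Arguments negclosed {L} S.
Arguments fwd_inK {L} S edged s c _ _.
Arguments twist_inv_fwd {L} edged s c.
Arguments negE_inv {L} x.
Arguments fwd {L} edged s c.
Arguments keyc_inj {L} edged c d _.


Section Ord.
Variable W : Type.
Variable lt : W -> W -> Prop.
Hypothesis WO : well_order lt.

Lemma ltp_trans x y z : ltp lt x y -> ltp lt y z -> ltp lt x z.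
Proof.
  destruct WO as [_ [T _]].
  destruct x, y, z; simpl; intros; try tauto; eauto.
Qed.

Lemma ltp_tri x y : ltp lt x y \/ x = y \/ ltp lt y x.
Proof.
  destruct WO as [_ [_ [T _]]].
  destruct x as [a|], y as [b|]; simpl; auto.
  destruct (T a b) as [H|[H|H]]; subst; auto.
Qed.

Lemma ltp_wf : well_founded (ltp lt).
Proof.
  destruct WO as [_ [_ [_ WF]]].
  assert (HS : forall w, Acc (ltp lt) (Some w)).
  { intro w; induction (WF w) as [w _ IH]; constructor.
    intros [y|] H; simpl in H; [apply IH; exact H | contradiction]. }
  intros [w|]; [apply HS|]. constructor; intros [y|] H; [apply HS|contradiction].
Qed.

Lemma ltp_max x1 x2 : exists x, (forall z, (x = z \/ ltp lt x z) -> (x1 = z \/ ltp lt x1 z))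
  /\ (forall z, (x = z \/ ltp lt x z) -> (x2 = z \/ ltp lt x2 z)) /\ (x = x1 \/ x = x2).
Proof.
  destruct (ltp_tri x1 x2) as [H|[H|H]].
  - exists x2; split; [|split]; auto.
    intros z [E|E]; subst; right; eauto using ltp_trans.
  - subst; exists x2; auto.
  - exists x1; split; [|split]; auto.
    intros z [E|E]; subst; right; eauto using ltp_trans.
Qed.
End Ord.
Arguments ltp_max {W lt} WO x1 x2.
Arguments ltp_wf {W lt} WO.

Lemma limit_fin (L : Type) (edged : bool) (W : Type) (lt : W -> W -> Prop)
  (WO : well_order lt) (sigma : W -> basic_twist L) (f0 : config L edged)
  (F : option W -> config L edged) (HR : is_run lt sigma f0 F) (eta : option W)
  (H1 : exists xi, ltp lt xi eta)
  (H2 : forall w, ltp lt (Some w) eta -> exists zeta, ltp lt (Some w) zeta /\ ltp lt zeta eta) :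
  forall lx : list (point L * axis), exists xi, ltp lt xi eta /\
    forall c, In (keyc edged c) lx -> F eta c <> None ->
      forall zeta, (xi = zeta \/ ltp lt xi zeta) -> ltp lt zeta eta -> F zeta c = F eta c.
Proof.
  induction lx as [|x lx IH].
  - destruct H1 as [xi Hxi]; exists xi; split; auto; intros c [].
  - destruct IH as [xi1 [Hxi1 Hc1]].
    destruct (classic (exists c, keyc edged c = x /\ F eta c <> None)) as [[c1 [Ek Nn]]|NE].
    + destruct (HR eta) as [_ [_ H3]].
      destruct (H3 H1 H2 c1) as [[v [[xi2 [Hxi2 Hev]] Ev]] | [_ Ev]]; [|contradiction].
      destruct (ltp_max WO xi1 xi2) as [xi [A [B C]]].
      exists xi; split; [destruct C; subst; auto|].
      intros c Hin Hn zeta Hz Hze.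
      destruct Hin as [Hin|Hin].
      * assert (c = c1) by (apply keyc_inj; congruence). subst c.
        rewrite Ev; apply Hev; auto.
      * apply Hc1; auto.
    + exists xi1; split; auto.
      intros c Hin Hn zeta Hz Hze.
      destruct Hin as [Hin|Hin].
      * exfalso; apply NE; eauto.
      * apply Hc1; auto.
Qed.

Theorem mainTheorem18 :
  forall (L : Type), infinite_type L ->
  forall (edged : bool) (W : Type) (lt : W -> W -> Prop), well_order lt ->
  forall (sigma : W -> basic_twist L) (f0 : config L edged)
         (F : option W -> config L edged),
    is_run lt sigma f0 F ->
    illegal f0 -> illegal (F None).
Proof.
  intros L _ edged W lt WO sigma f0 F HR [c0 Hc0].
  destruct (fst (keyc edged c0)) as [[a b] d] eqn:Ep0.
  set (S := a :: negE a :: b :: negE b :: d :: negE d :: nil).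
  assert (HN : negclosed S).
  { intros x Hx; unfold S in *; simpl in Hx.
    repeat destruct Hx as [Hx|Hx]; subst; simpl; rewrite ?negE_inv; tauto. }
  assert (HK0 : inK S (fst (keyc edged c0))).
  { rewrite Ep0; unfold inK, S; simpl; tauto. }
  set (lx := list_prod (list_prod (list_prod S S) S) (AX :: AY :: AZ :: nil)).
  assert (Hlx : forall c : cell L edged, inK S (fst (keyc edged c)) -> In (keyc edged c) lx).
  { intros c [h1 [h2 h3]]. destruct (keyc edged c) as [[[x y] z] j]; cbn [fst coord] in h1, h2, h3.
    unfold lx; apply in_prod; [repeat apply in_prod; auto|].
    destruct j; simpl; auto. }
  assert (Main : forall eta, exists c, inK S (fst (keyc edged c)) /\ F eta c = None).
  { intro eta. induction (ltp_wf WO eta) as [eta _ IH].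
    destruct (HR eta) as [A1 [A2 A3]].
    destruct (classic (exists xi, ltp lt xi eta)) as [Hex|Hnex].
    2:{ exists c0; split; auto. rewrite A1; auto. intros xi Hxi; apply Hnex; eauto. }
    destruct (classic (exists w, ltp lt (Some w) eta /\
        forall zeta, ~ (ltp lt (Some w) zeta /\ ltp lt zeta eta))) as [[w [Hw Hs]]|Hns].
    - destruct (IH (Some w) Hw) as [c [Hc Hf]].
      exists (fwd edged (sigma w) c); split; [apply fwd_inK; auto|].
      rewrite (A2 w Hw Hs). unfold act. rewrite twist_inv_fwd. exact Hf.
    - assert (H2 : forall w, ltp lt (Some w) eta ->
          exists zeta, ltp lt (Some w) zeta /\ ltp lt zeta eta).
      { intros w Hw. apply NNPP; intro C. apply Hns; exists w; split; auto.
        intros zeta Z; apply C; eauto. }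
      destruct (@limit_fin L edged W lt WO sigma f0 F HR eta Hex H2 lx) as [xi [Hxi Hfin]].
      destruct (IH xi Hxi) as [c [Hc Hf]].
      exists c; split; auto.
      destruct (F eta c) as [v|] eqn:Ev; auto.
      rewrite <- Ev, <- Hf; symmetry; apply Hfin; auto; congruence. }
  destruct (Main None) as [c [_ Hc]]; exists c; exact Hc.
Qed.
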